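(* Let $\alpha>0$. The equation $e^{2\sigma}=\alpha\sigma+\frac12$ has infinitely many roots $\sigma\in\mathbb{C}$, and their real parts are unbounded above: there is a sequence of roots $\sigma_k$ with $\Im(\sigma_k)\to+\infty$ and $\Re(\sigma_k)-\frac12\ln k$ bounded as $k\to\infty$; in particular $\Re(\sigma_k)\to+\infty$.
   Context: This is the dispersion relation of the square-wave limit ($\beta\to0$) of the model equation $u_t+\frac12(u^2-u\,u(0^-,t))_x=f(x,u(0^-,t))$ with the shifted-Gaussian source whose peak location is $-u(0^-,t)^{-\alpha}$; its roots with positive real part are the eigenvalues of the linearized problem in that limit. *)

(* Defs.v *)
From Stdlib Require Import Reals.
Open Scope R_scope.

Definition Cplx : Type := (R * R)%type.
Definition Re (z : Cplx) : R := fst z.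
Definition Im (z : Cplx) : R := snd z.

Definition Cexp (z : Cplx) : Cplx := (exp (Re z) * cos (Im z), exp (Re z) * sin (Im z)).
Definition Cscal (a : R) (z : Cplx) : Cplx := (a * Re z, a * Im z).
Definition Cadd (z w : Cplx) : Cplx := (Re z + Re w, Im z + Im w).
Definition RtoC (a : R) : Cplx := (a, 0).

Definition is_root (alpha : R) (s : Cplx) : Prop :=
  Cexp (Cscal 2 s) = Cadd (Cscal alpha s) (RtoC (1/2)).

(* Main.v *)
Require Import Defs.
From Stdlib Require Import Reals Lra Lia.
From Coquelicot Require Coquelicot.
Open Scope R_scope.

Definition Hf (alpha y : R) := alpha/2 * ln (alpha*y / sin(2*y)) + 1/2 - alpha*y*cos(2*y)/sin(2*y).

Module CC.
Import Coquelicot.Coquelicot.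
Lemma Hcont alpha y : 0 < alpha -> 0 < y -> 0 < sin (2*y) -> continuity_pt (Hf alpha) y.
Proof. intros ha hy hs.
apply continuity_pt_filterlim. change (continuous (Hf alpha) y).
apply (@ex_derive_continuous R_AbsRing R_NormedModule). unfold Hf.
auto_derive. repeat split; try lra.
apply Rmult_lt_0_compat. apply Rmult_lt_0_compat; lra. apply Rinv_0_lt_compat; lra.
Qed.
End CC.

Definition cc := sin (PI/4).

Lemma cc_pos : 0 < cc.
Proof. unfold cc; rewrite sin_PI4. apply Rdiv_lt_0_compat; [lra|]. apply sqrt_lt_R0; lra. Qed.
Lemma cc_le1 : cc <= 1.
Proof. unfold cc; apply SIN_bound. Qed.
Lemma cos_PI4_cc : cos (PI/4) = cc.
Proof. unfold cc; rewrite sin_PI4, cos_PI4; reflexivity. Qed.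

Lemma cos_ge u : Rabs u <= PI/4 -> cc <= cos u.
Proof. intro h. rewrite <- cos_PI4_cc. assert (hp := PI_RGT_0).
 assert (cos u = cos (Rabs u)).
 { unfold Rabs; destruct (Rcase_abs u). rewrite cos_neg; reflexivity. reflexivity. }
 rewrite H. destruct (Rle_lt_or_eq_dec _ _ h) as [h1|h1].
 - left. apply cos_decreasing_1; try lra. apply Rabs_pos.
 - rewrite h1; lra.
Qed.

Lemma sin_bnd n y : INR n*PI + PI/8 <= y <= INR n*PI + 3*PI/8 -> cc <= sin (2*y).
Proof. intro h. assert (hp := PI_RGT_0).
 replace (2*y) with ((2*y - 2*INR n*PI) + 2*INR n * PI) by ring.
 rewrite sin_period. rewrite <- cos_shift. apply cos_ge.
 apply Rabs_le. lra.
Qed.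

Lemma ln_le' x y : 0 < x -> x <= y -> ln x <= ln y.
Proof. intros hx h. destruct (Rle_lt_or_eq_dec _ _ h) as [h1|h1].
 left; apply ln_increasing; auto. rewrite h1; lra. Qed.

Lemma ln_lt_id a : 0 < a -> ln a < a.
Proof. intro h. apply exp_lt_inv. rewrite exp_ln by auto.
 assert (1 + a < exp a) by (apply exp_ineq1; lra). lra. Qed.

Lemma div_le_l a b c : 0 < c -> a*c <= b -> a <= b/c.
Proof. intros hc h. replace a with ((a*c)/c) by (field; lra).
 unfold Rdiv; apply Rmult_le_compat_r; [left; apply Rinv_0_lt_compat; lra | lra]. Qed.
Lemma div_le_r a b c : 0 < c -> b <= a*c -> b/c <= a.
Proof. intros hc h. replace a with ((a*c)/c) by (field; lra).
 unfold Rdiv; apply Rmult_le_compat_r; [left; apply Rinv_0_lt_compat; lra | lra]. Qed.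

Lemma Ha alpha n : 0 < alpha -> Hf alpha (INR n*PI + PI/8) =
  alpha/2 * ln (alpha*(INR n*PI + PI/8)/cc) + 1/2 - alpha*(INR n*PI + PI/8).
Proof. intro ha. unfold Hf.
 replace (2*(INR n*PI + PI/8)) with (PI/4 + 2*INR n*PI) by field.
 rewrite sin_period, cos_period, cos_PI4_cc. fold cc.
 assert (hc := cc_pos). field. lra. Qed.

Lemma Hb alpha n : 0 < alpha -> Hf alpha (INR n*PI + 3*PI/8) =
  alpha/2 * ln (alpha*(INR n*PI + 3*PI/8)/cc) + 1/2 + alpha*(INR n*PI + 3*PI/8).
Proof. intro ha. unfold Hf.
 replace (2*(INR n*PI + 3*PI/8)) with ((PI - PI/4) + 2*INR n*PI) by field.
 rewrite sin_period, cos_period, sin_PI_x, Rtrigo_facts.cos_pi_minus, cos_PI4_cc. fold cc.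
 assert (hc := cc_pos). field. lra. Qed.

Lemma root_ex alpha n : 0 < alpha -> Rabs (ln (alpha/cc)) + 1/alpha + 1 < INR n ->
  {y | INR n*PI + PI/8 <= y <= INR n*PI + 3*PI/8 /\ Hf alpha y = 0}.
Proof. intros ha hn. assert (hp := PI_RGT_0). assert (hc := cc_pos). assert (hc1 := cc_le1).
 assert (h0 : 0 <= Rabs (ln (alpha/cc))) by apply Rabs_pos.
 assert (hv : alpha * (1/alpha) = 1) by (field; lra).
 assert (hva : 0 < 1/alpha) by (apply Rdiv_lt_0_compat; lra).
 assert (hnp : 0 < INR n) by lra.
 assert (hnpi : 0 < INR n * PI) by (apply Rmult_lt_0_compat; lra).
 assert (hp1 := PI2_1). assert (hnpi2 : INR n <= INR n * PI) by nra.
 apply Ranalysis5.IVT_interv.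
 - intros a h. apply CC.Hcont; auto. nra. pose proof (sin_bnd n a h). lra.
 - lra.
 - rewrite Ha by auto. set (a := INR n * PI + PI/8).
   replace (alpha*a/cc) with ((alpha/cc)*a) by (field; lra).
   assert (0 < a) by (unfold a; nra).
   rewrite ln_mult; [| apply Rdiv_lt_0_compat; lra | lra].
   assert (ln a < a) by (apply ln_lt_id; lra).
   assert (ln (alpha/cc) <= Rabs (ln (alpha/cc))) by apply Rle_abs.
   assert (alpha * (a - ln a) > 0) by (apply Rmult_lt_0_compat; lra).
   assert (alpha * (a - (ln (alpha/cc) + 1/alpha + 1)) > 0) by (apply Rmult_lt_0_compat; unfold a; lra).
   nra.
 - rewrite Hb by auto. set (b := INR n * PI + 3*PI/8).
   assert (1 < alpha * b).
   { assert (alpha * (b - (1/alpha)) > 0) by (apply Rmult_lt_0_compat; unfold b; lra). nra. }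
   assert (1 < alpha*b/cc).
   { apply Rlt_le_trans with (alpha*b); [lra|]. apply div_le_l; auto. nra. }
   assert (0 < ln (alpha*b/cc)) by (rewrite <- ln_1; apply ln_increasing; lra).
   nra.
Qed.

Theorem mainTheorem6 (alpha : R) (halpha : 0 < alpha) :
  (exists f : nat -> Cplx, (forall k, is_root alpha (f k)) /\
     (forall i j, f i = f j -> i = j)) /\
  (exists s : nat -> Cplx,
     (forall k, is_root alpha (s k)) /\
     cv_infty (fun k => Im (s k)) /\
     (exists M : R, forall k : nat, (1 <= k)%nat ->
        Rabs (Re (s k) - / 2 * ln (INR k)) <= M) /\
     cv_infty (fun k => Re (s k))).
Proof.
 assert (hp := PI_RGT_0). assert (hp1 := PI2_1). assert (hc := cc_pos). assert (hc1 := cc_le1).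
 destruct (INR_archimed 1 (Rabs (ln (alpha/cc)) + 1/alpha + 1)) as [K HK]; [lra|].
 assert (hKn : forall k, Rabs (ln (alpha/cc)) + 1/alpha + 1 < INR (k + K)).
 { intro k. rewrite plus_INR. assert (0 <= INR k) by apply pos_INR. lra. }
 set (y := fun k => proj1_sig (root_ex alpha (k+K) halpha (hKn k))).
 assert (hy : forall k, INR (k+K)*PI + PI/8 <= y k <= INR (k+K)*PI + 3*PI/8 /\ Hf alpha (y k) = 0).
 { intro k. unfold y. destruct (root_ex alpha (k+K) halpha (hKn k)) as [z hz]. exact hz. }
 assert (hK0 : 0 <= INR K) by apply pos_INR.
 assert (hypos : forall k, INR k * PI <= y k /\ 0 < y k).
 { intro k. destruct (hy k) as [[h1 h2] _]. rewrite plus_INR in h1.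
   assert (0 <= INR k) by apply pos_INR. nra. }
 assert (hsin : forall k, cc <= sin (2 * y k) <= 1).
 { intro k. split. apply (sin_bnd (k+K)). apply hy. apply SIN_bound. }
 set (s := fun k => (/2 * ln (alpha * y k / sin (2 * y k)), y k) : Cplx).
 assert (hroot : forall k, is_root alpha (s k)).
 { intro k. unfold is_root, s, Cexp, Cscal, Cadd, RtoC, Re, Im; simpl.
   destruct (hy k) as [_ hH]. destruct (hsin k). destruct (hypos k).
   assert (hu : 0 < alpha * y k / sin (2 * y k)) by (apply Rdiv_lt_0_compat; nra).
   replace (2 * (/ 2 * ln (alpha * y k / sin (2 * y k)))) with (ln (alpha * y k / sin (2 * y k))) by field.
   rewrite exp_ln by auto. unfold Hf in hH. f_equal.
   - assert (alpha * y k / sin (2 * y k) * cos (2 * y k) = alpha * y k * cos (2 * y k) / sin (2 * y k)) by (field; lra).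
     lra.
   - field. lra. }
 split.
 - exists s. split; auto. intros i j hij.
   assert (hyij : y i = y j) by (change (snd (s i) = snd (s j)); rewrite hij; reflexivity).
   destruct (hy i) as [[hi1 hi2] _]. destruct (hy j) as [[hj1 hj2] _].
   rewrite plus_INR in hi1, hi2, hj1, hj2.
   destruct (Compare_dec.lt_eq_lt_dec i j) as [[h|h]|h]; auto; exfalso.
   + apply Nat.le_succ_l in h. apply le_INR in h. rewrite S_INR in h. nra.
   + apply Nat.le_succ_l in h. apply le_INR in h. rewrite S_INR in h. nra.
 - exists s. split; auto. split; [|split].
   + intro M. destruct (INR_archimed PI M) as [N HN]; [lra|]. exists N. intros n hn.
     apply le_INR in hn. unfold s, Im; simpl. destruct (hypos n). nra.
   + set (L0 := alpha * PI). set (U0 := alpha * (INR K + 2) * PI / cc).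
     exists (/2 * (Rabs (ln L0) + Rabs (ln U0))). intros k hk.
     apply le_INR in hk. simpl in hk.
     destruct (hsin k). destruct (hypos k). destruct (hy k) as [[h1 h2] _]. rewrite plus_INR in h1, h2.
     set (w := alpha * y k / sin (2 * y k)).
     assert (hw : w * sin (2 * y k) = alpha * y k) by (unfold w; field; lra).
     assert (hwp : 0 < w) by (unfold w; apply Rdiv_lt_0_compat; nra).
     assert (hwl : alpha * y k <= w) by nra.
     assert (hwu : w * cc <= alpha * y k) by nra.
     unfold s, Re; simpl. fold w.
     assert (hkp : 0 < INR k) by lra.
     replace (/ 2 * ln w - / 2 * ln (INR k)) with (/2 * ln (w * / INR k)).
     2:{ rewrite ln_mult, ln_Rinv; [ring|lra|lra|apply Rinv_0_lt_compat; lra]. }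
     set (z := w * / INR k).
     assert (hzk : z * INR k = w) by (unfold z; field; lra).
     assert (hL0 : 0 < L0) by (unfold L0; nra).
     assert (hzl : L0 <= z).
     { assert (alpha * (INR k * PI) <= alpha * y k) by (apply Rmult_le_compat_l; lra).
       unfold L0. nra. }
     assert (hzu : z <= U0).
     { unfold U0. apply div_le_l; auto.
       assert (INR k + INR K + 1 <= INR k * (INR K + 2)) by nra.
       assert (y k <= INR k * (INR K + 2) * PI) by nra.
       assert (alpha * y k <= alpha * (INR k * (INR K + 2) * PI)) by (apply Rmult_le_compat_l; lra).
       nra. }
     assert (ln L0 <= ln z) by (apply ln_le'; auto).
     assert (ln z <= ln U0) by (apply ln_le'; lra).
     assert (- Rabs (ln L0) <= ln L0) by (rewrite <- Rabs_Ropp; apply Rle_trans with (- - ln L0); [apply Ropp_le_contravar; apply Rle_abs | lra]).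
     assert (ln U0 <= Rabs (ln U0)) by apply Rle_abs.
     assert (0 <= Rabs (ln L0)) by apply Rabs_pos. assert (0 <= Rabs (ln U0)) by apply Rabs_pos.
     apply Rabs_le. lra.
   + intro M. destruct (INR_archimed (alpha * PI) (exp (2*M))) as [N HN]; [nra|]. exists N. intros n hn.
     apply le_INR in hn. unfold s, Re; simpl. destruct (hypos n). destruct (hsin n).
     set (w := alpha * y n / sin (2 * y n)).
     assert (hw : w * sin (2 * y n) = alpha * y n) by (unfold w; field; lra).
     assert (hwl : alpha * y n <= w) by (assert (0 < w) by (unfold w; apply Rdiv_lt_0_compat; nra); nra).
     assert (exp (2*M) < w).
     { assert (alpha * (INR N * PI) <= alpha * y n) by (apply Rmult_le_compat_l; nra). nra. }
     assert (2*M < ln w) by (rewrite <- (ln_exp (2*M)); apply ln_increasing; auto; apply exp_pos).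
     lra.
Qed.
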